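(* Fix a threshold $R\in(0,1)$ and a receiver type $i\in[-1/2,1/2]$. Then: (i) the receiver of type $i$ accepts the buy recommendation if and only if he accepts the don't-buy recommendation; (ii) the receiver of type $i$ accepts the recommendation (equivalently, by (i), the buy recommendation) if and only if $\Delta_O^B\ge i\,\Delta_S^B$.
   Context: Setting. Consumer types are $i\in[-1/2,1/2]$, distributed according to a continuous cumulative distribution function $F$ with full support on $[-1/2,1/2]$. A product has a quality vector $(Q_1,Q_2)\in\{0,1\}^2$; a type-$i$ consumer gets payoff $(1/2+i)Q_1+(1/2-i)Q_2$ from it. The versions $(1,1),(1,0),(0,1),(0,0)$ have prior probabilities $q_H,q_1,q_2,q_L$ respectively, all strictly positive and summing to $1$. One product carries a recommendation from a sender whose type is drawn from $F$ independently of the product; given a threshold $R\in(0,1)$, the sender gives a buy recommendation $B$ if her payoff from the product is at least $R$ and a don't-buy recommendation $D$ otherwise. Let $\phi_1(R)=1-F(R-1/2)$, $\phi_2(R)=F(1/2-R)$, $\pi^B=q_H+q_1\phi_1(R)+q_2\phi_2(R)$ and $\pi^D=1-\pi^B$. The receiver's Bayesian posteriors over $(1,1),(1,0),(0,1),(0,0)$ are $p^B_H=q_H/\pi^B$, $p^B_1=q_1\phi_1(R)/\pi^B$, $p^B_2=q_2\phi_2(R)/\pi^B$, $p^B_L=0$ after $B$, and $p^D_H=0$, $p^D_1=q_1(1-\phi_1(R))/\pi^D$, $p^D_2=q_2(1-\phi_2(R))/\pi^D$, $p^D_L=q_L/\pi^D$ after $D$. For $r\in\{B,D\}$ let $U_i^r=p_H^r+(1/2+i)p_1^r+(1/2-i)p_2^r$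 (expected payoff of type $i$ from the recommended product) and $U_i^0=q_H+(1/2+i)q_1+(1/2-i)q_2$ (expected payoff from an alternative product without a recommendation). A receiver of type $i$ accepts the buy recommendation if $U_i^B\ge U_i^0$, and accepts the don't-buy recommendation if $U_i^0\ge U_i^D$. The objective and subjective effects of a recommendation $r\in\{B,D\}$ are $\Delta_O^r=p_H^r-q_H+\frac{p_1^r-q_1}{2}+\frac{p_2^r-q_2}{2}$ and $\Delta_S^r=(p_2^r-q_2)-(p_1^r-q_1)$. *)

(* Defs.v *)
From Stdlib Require Import Reals.
Open Scope R_scope.

Definition type_cdf (F : R -> R) : Prop :=
  continuity F /\
  (forall x y, x <= y -> F x <= F y) /\
  (forall x, x <= -1/2 -> F x = 0) /\
  (forall x, 1/2 <= x -> F x = 1) /\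
  (forall x y, -1/2 <= x -> x < y -> y <= 1/2 -> F x < F y).

(* Prior over versions (1,1),(1,0),(0,1),(0,0). *)
Definition valid_prior (qH q1 q2 qL : R) : Prop :=
  0 < qH /\ 0 < q1 /\ 0 < q2 /\ 0 < qL /\ qH + q1 + q2 + qL = 1.

Section Model.
Variables (F : R -> R) (qH q1 q2 qL : R) (Rt : R).

Definition phi1 : R := 1 - F (Rt - 1/2).
Definition phi2 : R := F (1/2 - Rt).
Definition piB : R := qH + q1 * phi1 + q2 * phi2.
Definition piD : R := 1 - piB.

Definition pBH : R := qH / piB.
Definition pB1 : R := q1 * phi1 / piB.
Definition pB2 : R := q2 * phi2 / piB.
Definition pBL : R := 0.
Definition pDH : R := 0.
Definition pD1 : R := q1 * (1 - phi1) / piD.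
Definition pD2 : R := q2 * (1 - phi2) / piD.
Definition pDL : R := qL / piD.

Definition UB (i : R) : R := pBH + (1/2 + i) * pB1 + (1/2 - i) * pB2.
Definition UD (i : R) : R := pDH + (1/2 + i) * pD1 + (1/2 - i) * pD2.
Definition U0 (i : R) : R := qH + (1/2 + i) * q1 + (1/2 - i) * q2.

Definition accepts_B (i : R) : Prop := U0 i <= UB i.
Definition accepts_D (i : R) : Prop := UD i <= U0 i.

Definition DeltaO_B : R := pBH - qH + (pB1 - q1) / 2 + (pB2 - q2) / 2.
Definition DeltaS_B : R := (pB2 - q2) - (pB1 - q1).
Definition DeltaO_D : R := pDH - qH + (pD1 - q1) / 2 + (pD2 - q2) / 2.
Definition DeltaS_D : R := (pD2 - q2) - (pD1 - q1).
End Model.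

(* Main.v *)
Require Import Defs.
From Stdlib Require Import Reals Lra.
Open Scope R_scope.

Theorem proposition1 (F : R -> R) (qH q1 q2 qL Rt i : R) :
  type_cdf F ->
  valid_prior qH q1 q2 qL ->
  0 < Rt < 1 ->
  -1/2 <= i <= 1/2 ->
  (accepts_B F qH q1 q2 Rt i <-> accepts_D F qH q1 q2 Rt i) /\
  (accepts_B F qH q1 q2 Rt i <->
     i * DeltaS_B F qH q1 q2 Rt <= DeltaO_B F qH q1 q2 Rt).
Proof.
  intros [Fc [Fm [F0 [F1 Fs]]]] [hH [h1 [h2 [hL hs]]]] HR Hi.
  assert (Fb : forall x, 0 <= F x <= 1).
  { intro x. split.
    - rewrite <- (F0 (Rmin x (-1/2))) by (apply Rmin_r). apply Fm, Rmin_l.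
    - rewrite <- (F1 (Rmax x (1/2))) by (apply Rmax_r). apply Fm, Rmax_l. }
  unfold accepts_B, accepts_D, DeltaS_B, DeltaO_B, UB, UD, U0,
    pBH, pB1, pB2, pDH, pD1, pD2, piD.
  pose proof (Fb (Rt - 1/2)) as Ha. pose proof (Fb (1/2 - Rt)) as Hb.
  assert (P1 : 0 <= phi1 F Rt <= 1) by (unfold phi1; lra).
  assert (P2 : 0 <= phi2 F Rt <= 1) by (unfold phi2; lra).
  assert (Hp : 0 < piB F qH q1 q2 Rt < 1).
  { unfold piB. split; nra. }
  set (a := phi1 F Rt) in *. set (b := phi2 F Rt) in *.
  set (p := piB F qH q1 q2 Rt) in *.
  assert (Ep : p = qH + q1 * a + q2 * b) by reflexivity.
  set (UB := qH / p + (1/2 + i) * (q1 * a / p) + (1/2 - i) * (q2 * b / p)).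
  set (UD := 0 + (1/2 + i) * (q1 * (1 - a) / (1 - p)) + (1/2 - i) * (q2 * (1 - b) / (1 - p))).
  set (U0 := qH + (1/2 + i) * q1 + (1/2 - i) * q2).
  assert (E : U0 = p * UB + (1 - p) * UD).
  { unfold U0, UB, UD. rewrite Ep in *. field. lra. }
  assert (E2 : UB - U0 = (qH / p - qH + (q1 * a / p - q1) / 2 + (q2 * b / p - q2) / 2)
     - i * (q2 * b / p - q2 - (q1 * a / p - q1))).
  { unfold UB, U0. field. lra. }
  split.
  - split; intro H; nra.
  - split; intro H; lra.
Qed.
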